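(* For every $n\ge 2$, an allocation that is both TEF1 and Pareto-optimal need not exist, for goods or for chores, even when there are only two types of items. That is, for each $n\ge2$ there is an instance with $n$ agents, all items goods, two item types, and no TEF1 and PO allocation; and likewise for chores.
   Context: Items arrive one per round in a fixed order $o_1,\dots,o_m$. Agents $N=[n]$ have additive valuations; goods have $v_i(o)\ge0$, chores $v_i(o)\le0$. ''Two types of items'' means the items can be partitioned into $S_1,S_2$ such that each agent values all items in the same set equally. An allocation $\mathcal{A}=(A_1,\dots,A_n)$ partitions the items; $\mathcal{A}^t$ is its restriction to $o_1,\dots,o_t$. An allocation $(B_i)$ is EF1 if for all $i,j$ there is a good $g\in B_j$ with $v_i(B_i)\ge v_i(B_j\setminus\{g\})$ (goods), resp. a chore $c\in B_i$ with $v_i(B_i\setminus\{c\})\ge v_i(B_j)$ (chores), considered satisfied if $v_i(B_i)\ge v_i(B_j)$. $\mathcal{A}$ is TEF1 if $\mathcal{A}^t$ is EF1 for every $t$. $\mathcal{A}$ is Pareto-optimal (PO) if no allocation $\mathcal{A}'$ has $v_i(A'_i)\ge v_i(A_i)$ for all $i$ with strict inequality for some $i$. *)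

(* Defs.v *)
From mathcomp Require Import all_boot all_order all_algebra.
Set Implicit Arguments. Unset Strict Implicit. Unset Printing Implicit Defensive.
Import Order.TTheory GRing.Theory Num.Theory.
Local Open Scope ring_scope.

(* Agents are 'I_n, items are 'I_m arriving in the order o_0, o_1, ..., o_{m-1}. *)

Section Fair.
Variables (R : realFieldType) (n m : nat).
Implicit Types (v : 'I_n -> 'I_m -> R) (a : {ffun 'I_m -> 'I_n}).

Definition all_goods v := forall (i : 'I_n) (o : 'I_m), 0 <= v i o.
Definition all_chores v := forall (i : 'I_n) (o : 'I_m), v i o <= 0.

Definition two_types v :=
  exists S : pred 'I_m, forall (i : 'I_n) (o o' : 'I_m),
    S o = S o' -> v i o = v i o'.

(* value of agent i for the bundle of agent j in the restriction A^t
   (items o_1..o_t, i.e. indices < t) *)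
Definition bval v a (t : nat) (i j : 'I_n) : R :=
  \sum_(o < m | (o < t)%N && (a o == j)) v i o.

Definition util v a (i : 'I_n) : R := bval v a m i i.

Definition EF1_goods v a (t : nat) :=
  forall i j : 'I_n,
    bval v a t i j <= bval v a t i i \/
    exists g : 'I_m, [/\ (g < t)%N, a g == j &
                         bval v a t i j - v i g <= bval v a t i i].

Definition EF1_chores v a (t : nat) :=
  forall i j : 'I_n,
    bval v a t i j <= bval v a t i i \/
    exists c : 'I_m, [/\ (c < t)%N, a c == i &
                         bval v a t i j <= bval v a t i i - v i c].

Definition TEF1_goods v a := forall t : nat, (t <= m)%N -> EF1_goods v a t.
Definition TEF1_chores v a := forall t : nat, (t <= m)%N -> EF1_chores v a t.

Definition PO v a :=
  ~ exists a' : {ffun 'I_m -> 'I_n},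
      (forall i, util v a i <= util v a' i) /\ exists i, util v a i < util v a' i.

End Fair.

(* Main.v *)
Require Import Defs.
From mathcomp Require Import all_boot all_order all_algebra.
From mathcomp Require Import lra zify.
Set Implicit Arguments. Unset Strict Implicit. Unset Printing Implicit Defensive.
Import Order.TTheory GRing.Theory Num.Theory.
Local Open Scope ring_scope.
Definition mv (m n : nat) (a : {ffun 'I_m -> 'I_n}) (o : 'I_m) (j : 'I_n) :
  {ffun 'I_m -> 'I_n} := [ffun x => if x == o then j else a x].

Lemma util_mv (R : realFieldType) (n m : nat) (v : 'I_n -> 'I_m -> R) a o j i :
  util v (mv a o j) i =
  util v a i - (if a o == i then v i o else 0) + (if j == i then v i o else 0).
Proof.
rewrite /util /bval.
under eq_bigl => x do rewrite ltn_ord /=.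
under [in RHS]eq_bigl => x do rewrite ltn_ord /=.
rewrite big_mkcond [in RHS]big_mkcond /=.
rewrite (bigD1 o) //= [in RHS](bigD1 o) //= ffunE eqxx.
rewrite (eq_bigr (fun x => if a x == i then v i x else 0)); last first.
  by move=> x /negbTE xo; rewrite ffunE xo.
by rewrite addrC [X in _ = X - _ + _]addrC addrK.
Qed.
Ltac clr := repeat match goal with H : @eq ?T _ _ |- _ =>
  lazymatch T with ordinal _ => clear H | Finite.sort _ => clear H | Equality.sort _ => clear H end end.
Ltac lra' := clr; lra.

Lemma sum_sub_ge (R : realFieldType) (I : finType) (P : pred I) (F : I -> R) (s : seq I) :
  uniq s -> all P s -> (forall x, P x -> 0 <= F x) ->
  \sum_(x <- s) F x <= \sum_(x | P x) F x.
Proof.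
move=> us /allP sP F0; rewrite [X in _ <= X](bigID (fun x => x \in s)) /=.
have -> : \sum_(x | P x && (x \in s)) F x = \sum_(x <- s) F x.
  rewrite (big_uniq _ us); apply: eq_bigl => x.
  by case xs: (x \in s); rewrite ?andbF ?andbT ?sP.
by rewrite lerDl; apply: sumr_ge0 => x /andP[Px _]; apply: F0.
Qed.

Lemma sum_sub_le (R : realFieldType) (I : finType) (P : pred I) (F : I -> R) (s : seq I) :
  uniq s -> all P s -> (forall x, P x -> F x <= 0) ->
  \sum_(x | P x) F x <= \sum_(x <- s) F x.
Proof.
move=> us sP F0; rewrite -lerN2 -!sumrN; apply: sum_sub_ge => // x Px.
by rewrite oppr_ge0 F0.
Qed.

Lemma sum_single (R : realFieldType) (I : finType) (P : pred I) (F : I -> R) o :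
  P o -> (forall x, P x -> x = o) -> \sum_(x | P x) F x = F o.
Proof.
move=> Po Pu; rewrite (bigD1 o) //= big1 ?addr0 // => x /andP[Px xo].
by rewrite (Pu x Px) eqxx in xo.
Qed.

Section Goods.
Variables (R : realFieldType) (n : nat) (hn : (2 <= n)%N).

Definition vg (i : 'I_n) (o : 'I_5) : R :=
  if val i == 0%N then (if (val o < 2)%N then 2 else 1)
  else if val i == 1%N then (if (val o < 2)%N then 1 else 2) else 0.

Lemma vg_ge0 i o : 0 <= vg i o.
Proof. rewrite /vg; repeat case: ifP => _; lra. Qed.

Lemma vg_le2 i o : vg i o <= 2.
Proof. rewrite /vg; repeat case: ifP => _; lra. Qed.

Lemma vg_pos i o : (val i <= 1)%N -> 0 < vg i o.
Proof.
rewrite /vg; case: ifP => [_ _|/eqP i0 i1]; first by case: ifP => _; lra.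
case: ifP => [_|/eqP]; first by case: ifP => _; lra.
lia.
Qed.

Let z : 'I_n := Ordinal (ltnW hn).
Let ag1 : 'I_n := Ordinal hn.
Let x0 : 'I_5 := @Ordinal 5 0 isT.
Let x1 : 'I_5 := @Ordinal 5 1 isT.
Let y2 : 'I_5 := @Ordinal 5 2 isT.
Let y3 : 'I_5 := @Ordinal 5 3 isT.
Let y4 : 'I_5 := @Ordinal 5 4 isT.

Lemma goods_main (a : {ffun 'I_5 -> 'I_n}) : TEF1_goods vg a -> PO vg a -> False.
Proof.
move=> T P.
have z_ag1 : (z == ag1) = false by [].
have Hza : forall o, a o = z \/ a o = ag1.
  move=> o; case E: (val (a o)) => [|[|k]].
  - by left; apply: val_inj.
  - by right; apply: val_inj.
  exfalso; apply: P; exists (mv a o ag1); split.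
    move=> i; rewrite util_mv.
    have -> : (if a o == i then vg i o else 0) = 0.
      by case: eqP => // <-; rewrite /vg E.
    by rewrite subr0 lerDl; case: ifP => _ //; apply: vg_ge0.
  exists ag1; rewrite util_mv.
  have -> : (a o == ag1) = false by apply/negbTE/eqP => /(congr1 val); rewrite E.
  by rewrite eqxx subr0 ltrDl vg_pos.
have Hsplit : forall l i, a x0 = l -> a x1 = l -> i != l -> (val i <= 1)%N -> False.
  move=> l i a0 a1 il i1.
  have LB : vg i x0 + vg i x1 <= bval vg a 2 i l.
    rewrite /bval (bigD1 x0) /= ?a0 ?eqxx // (bigD1 x1) /= ?a1 ?eqxx //.
    by rewrite addrA lerDl sumr_ge0 // => *; apply: vg_ge0.
  have B0 : bval vg a 2 i i = 0.
    rewrite /bval big1 // => o /andP[o2 /eqP ao].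
    have : (o == x0) || (o == x1) by apply/orP; case: o o2 ao => [[|[|k]] Ho] //= *; [left|right]; apply/eqP/val_inj.
    by case/orP => /eqP oo; move: ao; rewrite oo ?a0 ?a1 => li; rewrite li eqxx in il.
  have p0 := vg_pos x0 i1.
  have e1 : vg i x1 = vg i x0 by [].
  have [Hle | [g [g2 /eqP ag Hg]]] := T 2%N isT i l.
  - rewrite B0 in Hle; clear a0 a1; lra.
  - have eg : vg i g = vg i x0 by rewrite /vg g2.
    rewrite B0 eg in Hg; clear a0 a1 ag; lra.
have [xa [xb [xa2 xb2 xab axa axb]]] : exists xa xb : 'I_5,
    [/\ (xa < 2)%N, (xb < 2)%N, xa != xb, a xa = ag1 & a xb = z].
  case: (Hza x0) => h0; case: (Hza x1) => h1.
  - by case: (Hsplit z ag1 h0 h1).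
  - by exists x1, x0.
  - by exists x0, x1.
  - by case: (Hsplit ag1 z h0 h1).
have ag1_z : (ag1 == z) = false by [].
have Hy : forall y : 'I_5, (2 <= val y)%N -> a y = ag1.
  move=> y y2'; case: (Hza y) => // ayz; exfalso; apply: P.
  exists (mv (mv a xa z) y ag1).
  have yxa : (y == xa) = false.
    by apply/negbTE/eqP => e; move: y2'; rewrite e leqNgt xa2.
  have e1 : vg z xa = 2 by rewrite /vg /= xa2.
  have e2 : vg z y = 1 by rewrite /vg /= ltnNge y2'.
  have e3 : vg ag1 xa = 1 by rewrite /vg /= xa2.
  have e4 : vg ag1 y = 2 by rewrite /vg /= ltnNge y2'.
  split.
    move=> i; rewrite !util_mv ffunE yxa ayz axa.
    case: (eqVneq i z) => [->|iz]; first by rewrite ?eqxx ag1_z e1 e2; lra'.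
    case: (eqVneq i ag1) => [->|ia]; first by rewrite ?eqxx ?z_ag1 e3 e4; lra'.
    lra'.
  exists z; rewrite !util_mv ffunE yxa ayz axa ?eqxx ag1_z e1 e2; lra'.
have n2 : y2 != xa by apply/eqP => e; move: xa2; rewrite -e.
have n3 : y3 != xa by apply/eqP => e; move: xa2; rewrite -e.
have n4 : y4 != xa by apply/eqP => e; move: xa2; rewrite -e.
have LB : \sum_(x <- [:: xa; y2; y3; y4]) vg z x <= bval vg a 5 z ag1.
  apply: sum_sub_ge; last by move=> *; apply: vg_ge0.
    rewrite /= !inE andbT -!(inj_eq val_inj) /=; move: xa2; lia.
  by rewrite /= axa !Hy // eqxx ltn_ord.
rewrite !big_cons big_nil in LB.
have B : bval vg a 5 z z = vg z xb.
  apply: sum_single; first by rewrite /= axb eqxx ltn_ord.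
  move=> x /andP[_ /eqP ax].
  case: (leqP 2 x) => x2; first by move: ax; rewrite Hy // => e; rewrite e eqxx in ag1_z.
  have : (nat_of_ord x == xa) || (nat_of_ord x == xb).
    have := xab; rewrite -(inj_eq val_inj) /= => xab'; move: xab' x2 xa2 xb2; lia.
  case/orP => /eqP /ord_inj e //; by move: ax; rewrite e axa => e'; rewrite e' eqxx in ag1_z.
have e1 : vg z xa = 2 by rewrite /vg /= xa2.
have e2 : vg z xb = 2 by rewrite /vg /= xb2.
have e3 : vg z y2 = 1 by [].
have e4 : vg z y3 = 1 by [].
have e5 : vg z y4 = 1 by [].
rewrite e1 e3 e4 e5 in LB.
have [Hle | [g [g5 /eqP ag Hg]]] := T 5%N isT z ag1.
  rewrite B e2 in Hle; lra'.
have := vg_le2 z g; rewrite B e2 in Hg; lra'.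
Qed.


End Goods.
Lemma surj_inj (T: finType) (f : T -> T): (forall y, exists x, f x = y) -> injective f.
Proof.
move=> sf.
have H : {in T &, injective f}.
  apply/image_injP; rewrite eqn_leq leq_image_card /=.
  apply: subset_leq_card; apply/subsetP => y _.
  have [x <-] := sf y; exact: image_f.
by move=> x y; apply: H.
Qed.

Section Chores.
Variables (R : realFieldType) (n : nat) (hn : (2 <= n)%N).

Definition vc (i : 'I_n) (o : 'I_(n.+3)) : R :=
  if (val o < n)%N then (if val i == 0%N then -2 else -1)
  else (if val i == 0%N then -1 else -2).

Lemma vc_le0 i o : vc i o <= 0.
Proof. rewrite /vc; repeat case: ifP => _; lra. Qed.

Lemma vc_ge i o : -2 <= vc i o.
Proof. rewrite /vc; repeat case: ifP => _; lra. Qed.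

Lemma vc_Y i o : (val o < n)%N -> vc i o <= -1.
Proof. by rewrite /vc => ->; case: ifP => _; lra. Qed.

Let z : 'I_n := Ordinal (ltnW hn).
Let ag1 : 'I_n := Ordinal hn.
Let hle : (n <= n.+3)%N. Proof. by do 3 apply: leqW. Qed.
Let w (k : 'I_n) : 'I_(n.+3) := widen_ord hle k.

Lemma chores_main (a : {ffun 'I_(n.+3) -> 'I_n}) : TEF1_chores vc a -> PO vc a -> False.
Proof.
move=> T P.
pose f k := a (w k).
have z_ag1 : (z == ag1) = false by [].
have ag1_z : (ag1 == z) = false by [].
have Hinj : injective f.
  move=> k1 k2 e; case: (eqVneq k1 k2) => // k12; exfalso.
  have Hsurj : forall p, exists k, f k = p.
    move=> p; case: (boolP [exists k, f k == p]) => [/existsP [k /eqP]|]; first by exists k.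
    rewrite negb_exists => /forallP np; exfalso.
    have B0 : bval vc a n (f k1) p = 0.
      rewrite /bval big1 // => o /andP[on /eqP aop].
      have : f (Ordinal on) == p by rewrite /f -aop; apply/eqP; congr (a _); apply: val_inj.
      by rewrite (negbTE (np _)).
    have B1 : bval vc a n (f k1) (f k1) <= vc (f k1) (w k1) + vc (f k1) (w k2).
      have U : uniq [:: w k1; w k2].
        rewrite /= inE andbT; apply/eqP => /(congr1 val) /= /val_inj.
        by apply/eqP.
      have A : all (fun o : 'I_(n.+3) => (o < n)%N && (a o == f k1)) [:: w k1; w k2].
        by rewrite /= !ltn_ord -/(f k1) -/(f k2) e eqxx.
      have := sum_sub_le (F := vc (f k1)) U A (fun x _ => vc_le0 (f k1) x).
      by rewrite !big_cons big_nil addr0.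
    have v1 := vc_Y (f k1) (ltn_ord k1 : (val (w k1) < n)%N).
    have v2 := vc_Y (f k1) (ltn_ord k2 : (val (w k2) < n)%N).
    have [Hle | [c [cn /eqP ac Hc]]] := T n hle (f k1) p.
      by rewrite B0 in Hle; lra'.
    have vcc : vc (f k1) c = vc (f k1) (w k1) by rewrite /vc cn /w /= ltn_ord.
    have vc2 : vc (f k1) (w k2) = vc (f k1) (w k1) by rewrite /vc /w /= !ltn_ord.
    rewrite B0 vcc in Hc; rewrite vc2 in B1 v2; lra'.
  by have := surj_inj Hsurj e; apply/eqP.
have [g fK gK] := injF_bij Hinj.
pose yz := w (g z).
have ayz : a yz = z by have := gK z.
have yzn : (yz < n)%N by rewrite /yz /w /= ltn_ord.
have HX : forall x : 'I_(n.+3), (n <= x)%N -> a x = z.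
  move=> x xn; case: (eqVneq (a x) z) => // axz; exfalso; apply: P.
  exists (mv (mv a x z) yz (a x)).
  have yzx : (yz == x) = false.
    by apply/negbTE/eqP => e; move: yzn; rewrite e ltnNge xn.
  have k0 : (val (a x) == 0%N) = false.
    by apply/negbTE/eqP => e; move: axz; rewrite (_ : a x = z) ?eqxx //; apply: val_inj.
  have e1 : vc z x = -1 by rewrite /vc ltnNge xn.
  have e2 : vc z yz = -2 by rewrite /vc yzn.
  have e3 : vc (a x) x = -2 by rewrite /vc ltnNge xn /= k0.
  have e4 : vc (a x) yz = -1 by rewrite /vc yzn k0.
  have xz : (a x == z) = false by apply/negbTE.
  have zx : (z == a x) = false by rewrite eq_sym xz.
  split.
    move=> i; rewrite !util_mv ffunE yzx ayz.
    case: (eqVneq i z) => [->|iz]; first by rewrite ?eqxx ?xz e1 e2; lra'.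
    case: (eqVneq i (a x)) => [ia|ia]; last by lra'.
    by rewrite ia e3 e4; lra'.
  exists z; rewrite !util_mv ffunE yzx ayz ?eqxx ?xz e1 e2; lra'.
have Hn0 : (n < n.+3)%N by lia.
have Hn1 : (n.+1 < n.+3)%N by lia.
have Hn2 : (n.+2 < n.+3)%N by lia.
pose X0 : 'I_(n.+3) := Ordinal Hn0.
pose X1 : 'I_(n.+3) := Ordinal Hn1.
pose X2 : 'I_(n.+3) := Ordinal Hn2.
have B1 : bval vc a n.+3 z ag1 = vc z (w (g ag1)).
  apply: sum_single; first by rewrite ltn_ord /= -/(f (g ag1)) gK eqxx.
  move=> x /andP[_ /eqP ax].
  case: (leqP n x) => xn; first by move: ax; rewrite HX // => e; rewrite e eqxx in z_ag1.
  have : f (Ordinal xn) = f (g ag1) by rewrite gK -ax /f; congr (a _); apply: val_inj.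
  by move/Hinj => <-; apply: val_inj.
have U : uniq [:: yz; X0; X1; X2].
  rewrite /= !inE andbT -!(inj_eq val_inj) /=; have := ltn_ord (g z); lia.
have A : all (fun o : 'I_(n.+3) => (o < n.+3)%N && (a o == z)) [:: yz; X0; X1; X2].
  rewrite /= ayz !HX //=; rewrite ?eqxx !andbT; have := ltn_ord (g z); lia.
have B2 := sum_sub_le (F := vc z) U A (fun x _ => vc_le0 z x).
rewrite !big_cons big_nil addr0 in B2.
have e1 : vc z yz = -2 by rewrite /vc yzn.
have e2 : forall x : 'I_(n.+3), (n <= x)%N -> vc z x = -1 by move=> x xn; rewrite /vc ltnNge xn.
rewrite e1 !e2 //= in B2.
have B2' : bval vc a n.+3 z z <= -5 by move: B2; rewrite /bval; lra'.
have e3 : vc z (w (g ag1)) = -2 by rewrite /vc /w /= ltn_ord.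
rewrite e3 in B1.
have [Hle | [c [cn /eqP ac Hc]]] := T n.+3 (leqnn _) z ag1.
  rewrite B1 in Hle; lra'.
have := vc_ge z c; rewrite B1 in Hc; lra'.
Qed.
End Chores.

Unset Implicit Arguments.

Theorem proposition2 (R : realFieldType) (n : nat) : (2 <= n)%N ->
  (exists (m : nat) (v : 'I_n -> 'I_m -> R),
      [/\ all_goods v, two_types v &
          forall a : {ffun 'I_m -> 'I_n}, ~ (TEF1_goods v a /\ PO v a)]) /\
  (exists (m : nat) (v : 'I_n -> 'I_m -> R),
      [/\ all_chores v, two_types v &
          forall a : {ffun 'I_m -> 'I_n}, ~ (TEF1_chores v a /\ PO v a)]).
Proof.
move=> hn; split.
  exists 5%N, (@vg R n); split.
  - by move=> i o; apply: vg_ge0.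
  - by exists (fun o : 'I_5 => (val o < 2)%N) => i o o' e; rewrite /vg e.
  - by move=> a [T P]; apply: (@goods_main R n hn a T P).
exists n.+3, (@vc R n); split.
- by move=> i o; apply: vc_le0.
- by exists (fun o : 'I_(n.+3) => (val o < n)%N) => i o o' e; rewrite /vc e.
- by move=> a [T P]; apply: (@chores_main R n hn a T P).
Qed.
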